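(* Let $P$ and $Q$ be rational Herglotz functions vanishing at infinity, i.e. $P(z)=\sum_{j\in J_1}A_j(p_j-z)^{-1}$ and $Q(z)=\sum_{\ell\in J_2}B_\ell(q_\ell-z)^{-1}$ with finite index sets $J_1,J_2$, $A_j\ge 0$, $B_\ell\ge 0$, $p_j,q_\ell\in\mathbb{R}$. Let $\Gamma$ be a closed, clockwise oriented Jordan contour in $\mathbb{C}$ containing no pole of $P$ or $Q$, such that every pole of $P$ or $Q$ lying in the interior of $\Gamma$ is strictly smaller than every pole of $P$ or $Q$ lying in the exterior of $\Gamma$ (i.e. $\Gamma$ encircles some of the poles ''starting from the left''). Then $$\frac{1}{2\pi i}\oint_\Gamma dz\,P(z)Q(z)\ge 0.$$
   Context: A Herglotz function is an analytic function $f:\mathbb{C}_+\to\mathbb{C}$ with $f(\mathbb{C}_+)\subseteq\mathbb{C}_+$, where $\mathbb{C}_+$ is the open upper half-plane. *)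

(* Defs.v *)
From Stdlib Require Import Reals List.
From Coquelicot Require Import Coquelicot.
Open Scope R_scope.

(** Rational Herglotz function vanishing at infinity, given by a finite list of
    pairs (A_j, p_j):  z |-> sum_j A_j (p_j - z)^{-1}. *)
Definition ratH (l : list (R * R)) (z : C) : C :=
  fold_right (fun Ap acc => Cplus acc (Cmult (RtoC (fst Ap)) (Cinv (Cminus (RtoC (snd Ap)) z))))
    (RtoC 0) l.

Definition nonneg_coeffs (l : list (R * R)) : Prop :=
  forall A p, In (A, p) l -> 0 <= A.

(** x is a pole of ratH l : some term with pole x has a positive coefficient
    (terms with A_j = 0 vanish identically and give no pole). *)
Definition is_pole (l : list (R * R)) (x : R) : Prop :=
  exists A, In (A, x) l /\ 0 < A.

Definition strictly_increasing (ts : list R) : Prop :=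
  forall i, (S i < length ts)%nat -> nth i ts 0 < nth (S i) ts 0.

(** A piecewise C^1 curve gamma on [t_0, t_n] (ts = [t_0; ...; t_n], n >= 1):
    on each [t_i, t_{i+1}], gamma agrees with a function g_i which is C^1 on R
    with derivative g_i' (gs = list of pairs (g_i, g_i')). *)
Definition piecewise_C1 (gamma : R -> C) (ts : list R)
    (gs : list ((R -> C) * (R -> C))) : Prop :=
  (2 <= length ts)%nat /\ length gs = pred (length ts) /\ strictly_increasing ts /\
  forall i, (i < length gs)%nat ->
    let g := fst (nth i gs (gamma, gamma)) in
    let g' := snd (nth i gs (gamma, gamma)) in
    (forall t, @is_derive R_AbsRing C_R_NormedModule g t (g' t)) /\
    (forall t, continuous g' t) /\
    (forall t, nth i ts 0 <= t <= nth (S i) ts 0 -> gamma t = g t).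

Definition t_start (ts : list R) : R := nth 0 ts 0.
Definition t_end (ts : list R) : R := last ts 0.

Definition jordan_closed (gamma : R -> C) (ts : list R) : Prop :=
  gamma (t_start ts) = gamma (t_end ts) /\
  forall s t, t_start ts <= s < t_end ts -> t_start ts <= t < t_end ts ->
    gamma s = gamma t -> s = t.

Definition contour_integral (ts : list R) (gs : list ((R -> C) * (R -> C)))
    (f : C -> C) : C :=
  fold_right Cplus (RtoC 0)
    (map (fun i =>
       let g := fst (nth i gs (fun _ => RtoC 0, fun _ => RtoC 0)) in
       let g' := snd (nth i gs (fun _ => RtoC 0, fun _ => RtoC 0)) in
       (@RInt C_R_CompleteNormedModule (fun t => Cmult (f (g t)) (g' t))
          (nth i ts 0) (nth (S i) ts 0) : C))
     (seq 0 (length gs))).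

Definition on_curve (gamma : R -> C) (ts : list R) (z : C) : Prop :=
  exists t, t_start ts <= t <= t_end ts /\ gamma t = z.

(** z lies in the exterior (unbounded component of the complement) of the curve:
    z can be joined, by a continuous path avoiding the curve, to a point of
    modulus larger than every point of the curve. *)
Definition in_exterior (gamma : R -> C) (ts : list R) (z : C) : Prop :=
  ~ on_curve gamma ts z /\
  exists p : R -> C,
    (forall s, 0 <= s <= 1 -> continuous p s) /\ p 0 = z /\
    (forall s, 0 <= s <= 1 -> ~ on_curve gamma ts (p s)) /\
    (forall t, t_start ts <= t <= t_end ts -> Cmod (gamma t) < Cmod (p 1)).

(** z lies in the interior (bounded component of the complement) of the curve. *)
Definition in_interior (gamma : R -> C) (ts : list R) (z : C) : Prop :=
  ~ on_curve gamma ts z /\ ~ in_exterior gamma ts z.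

(** Clockwise orientation: the winding number (1/2 pi i) \oint dw/(w - z)
    equals -1 for every point z of the interior. *)
Definition clockwise (gamma : R -> C) (ts : list R)
    (gs : list ((R -> C) * (R -> C))) : Prop :=
  forall z, in_interior gamma ts z ->
    contour_integral ts gs (fun w => Cinv (Cminus w z)) = Cmult (RtoC (-2 * PI)) Ci.

(* Main.v *)
Require Import Defs.
From Stdlib Require Import Reals List.
From Coquelicot Require Import Coquelicot.
From Stdlib Require Import Lra Lia FunctionalExtensionality.
Open Scope R_scope.


Notation CR := C_R_NormedModule.

Lemma isd_fst (f : R -> C) t l : @is_derive R_AbsRing CR f t l ->
  is_derive (fun s => fst (f s)) t (fst l).
Proof.
  intros H. unfold is_derive in *.
  eapply filterdiff_ext_lin.
  apply (filterdiff_comp f (fun x : CR => fst x) _ (fun x : CR => fst x) H).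
  apply filterdiff_linear, is_linear_fst.
  intros y. reflexivity.
Qed.

Lemma isd_snd (f : R -> C) t l : @is_derive R_AbsRing CR f t l ->
  is_derive (fun s => snd (f s)) t (snd l).
Proof.
  intros H. unfold is_derive in *.
  eapply filterdiff_ext_lin.
  apply (filterdiff_comp f (fun x : CR => snd x) _ (fun x : CR => snd x) H).
  apply filterdiff_linear, is_linear_snd.
  intros y. reflexivity.
Qed.

Lemma isd_pair (a b : R -> R) t la lb : is_derive a t la -> is_derive b t lb ->
  @is_derive R_AbsRing CR (fun s => (a s, b s) : C) t (la, lb).
Proof.
  intros Ha Hb. unfold is_derive in *.
  eapply filterdiff_ext_lin.
  apply (filterdiff_comp_2 (K:=R_AbsRing) (W:=CR) a b (fun x y => (x, y)) _ _ (fun x y => (x,y)) Ha Hb).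
  apply filterdiff_linear.
  split.
  - intros [x1 x2] [y1 y2]; reflexivity.
  - intros k [x1 x2]; reflexivity.
  - exists 1. split. lra. intros [x1 x2]. simpl. rewrite Rmult_1_l. apply Rle_refl.
  - intros y. reflexivity.
Qed.

Lemma cont_fst (f : R -> C) t : continuous f t -> continuous (fun s => fst (f s)) t.
Proof.
  intros H. apply (continuous_comp f fst). auto.
  destruct (f t) as [x y]. apply continuous_fst.
Qed.
Lemma cont_snd (f : R -> C) t : continuous f t -> continuous (fun s => snd (f s)) t.
Proof.
  intros H. apply (continuous_comp f snd). auto.
  destruct (f t) as [x y]. apply continuous_snd.
Qed.
Lemma cont_pair (a b : R -> R) t : continuous a t -> continuous b t ->
  continuous (fun s => (a s, b s) : C) t.
Proof.
  intros Ha Hb. apply (continuous_comp_2 (X:=C_UniformSpace) a b pair); auto.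
  eapply continuous_ext. 2: apply continuous_id. intros [x y]; reflexivity.
Qed.

Notation isdC f t l := (@is_derive R_AbsRing CR f t l).

Lemma isdC_split (f : R -> C) t l :
  is_derive (fun s => fst (f s)) t (fst l) -> is_derive (fun s => snd (f s)) t (snd l) ->
  isdC f t l.
Proof.
  intros H1 H2. destruct l as [l1 l2].
  eapply is_derive_ext. 2: apply (isd_pair _ _ _ _ _ H1 H2).
  intros s. simpl. destruct (f s); reflexivity.
Qed.

Ltac fixD H := match type of H with is_derive ?a ?t ?l =>
  replace (Derive (fun x => a x) t) with l by (symmetry; apply is_derive_unique; exact H) end.

Lemma isdC_mult (f g : R -> C) t df dg : isdC f t df -> isdC g t dg ->
  isdC (fun s => Cmult (f s) (g s)) t (Cplus (Cmult df (g t)) (Cmult (f t) dg)).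
Proof.
  intros Hf Hg.
  set (a1 := fun s => fst (f s)). set (b1 := fun s => snd (f s)).
  set (a2 := fun s => fst (g s)). set (b2 := fun s => snd (g s)).
  assert (Ha1 : is_derive (fun s : R => fst (f s)) t (fst df)) by exact (isd_fst _ _ _ Hf).
  assert (Hb1 : is_derive (fun s : R => snd (f s)) t (snd df)) by exact (isd_snd _ _ _ Hf).
  assert (Ha2 : is_derive (fun s : R => fst (g s)) t (fst dg)) by exact (isd_fst _ _ _ Hg).
  assert (Hb2 : is_derive (fun s : R => snd (g s)) t (snd dg)) by exact (isd_snd _ _ _ Hg).
  apply isdC_split.
  - change (is_derive (fun s => a1 s * a2 s - b1 s * b2 s) t
      (fst (Cplus (Cmult df (g t)) (Cmult (f t) dg)))).
    auto_derive.
    + repeat split; eexists; eassumption.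
    + unfold a1, b1, a2, b2 in *. rewrite (is_derive_unique _ _ _ Ha1), (is_derive_unique _ _ _ Hb1), (is_derive_unique _ _ _ Ha2), (is_derive_unique _ _ _ Hb2). simpl. ring.
  - change (is_derive (fun s => a1 s * b2 s + b1 s * a2 s) t
      (snd (Cplus (Cmult df (g t)) (Cmult (f t) dg)))).
    auto_derive.
    + repeat split; eexists; eassumption.
    + unfold a1, b1, a2, b2 in *. rewrite (is_derive_unique _ _ _ Ha1), (is_derive_unique _ _ _ Hb1), (is_derive_unique _ _ _ Ha2), (is_derive_unique _ _ _ Hb2). simpl. ring.
Qed.


Lemma isdC_inv (f : R -> C) t df : isdC f t df -> f t <> RtoC 0 ->
  isdC (fun s => Cinv (f s)) t (Copp (Cmult df (Cmult (Cinv (f t)) (Cinv (f t))))).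
Proof.
  intros Hf Hz.
  set (a1 := fun s => fst (f s)). set (b1 := fun s => snd (f s)).
  assert (Ha1 : is_derive (fun s : R => fst (f s)) t (fst df)) by exact (isd_fst _ _ _ Hf).
  assert (Hb1 : is_derive (fun s : R => snd (f s)) t (snd df)) by exact (isd_snd _ _ _ Hf).
  assert (Hn : a1 t ^ 2 + b1 t ^ 2 <> 0).
  { unfold a1, b1. destruct (f t) as [x y]. simpl. intros E. apply Hz.
    assert (x = 0) by nra. assert (y = 0) by nra. subst. reflexivity. }
  apply isdC_split.
  - change (is_derive (fun s => a1 s / (a1 s ^2 + b1 s ^ 2)) t
      (fst (Copp (Cmult df (Cmult (Cinv (f t)) (Cinv (f t))))))).
    auto_derive.
    + repeat split; try (eexists; eassumption). exact Hn.
    + unfold a1, b1 in *. rewrite (is_derive_unique _ _ _ Ha1), (is_derive_unique _ _ _ Hb1). simpl. field; contradict Hn; nra.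
  - change (is_derive (fun s => - b1 s / (a1 s ^2 + b1 s ^ 2)) t
      (snd (Copp (Cmult df (Cmult (Cinv (f t)) (Cinv (f t))))))).
    auto_derive.
    + repeat split; try (eexists; eassumption). exact Hn.
    + unfold a1, b1 in *. rewrite (is_derive_unique _ _ _ Ha1), (is_derive_unique _ _ _ Hb1). simpl. field; contradict Hn; nra.
Qed.

Definition LogC (u : C) : C := (ln (fst u ^ 2 + snd u ^ 2) / 2, atan (snd u / fst u)).

Lemma isdC_log (f : R -> C) t df : isdC f t df -> 0 < fst (f t) ->
  isdC (fun s => LogC (f s)) t (Cmult df (Cinv (f t))).
Proof.
  intros Hf Hp.
  set (a1 := fun s => fst (f s)). set (b1 := fun s => snd (f s)).
  assert (Ha1 : is_derive (fun s : R => fst (f s)) t (fst df)) by exact (isd_fst _ _ _ Hf).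
  assert (Hb1 : is_derive (fun s : R => snd (f s)) t (snd df)) by exact (isd_snd _ _ _ Hf).
  assert (Hp' : 0 < a1 t) by exact Hp.
  assert (Hn : 0 < a1 t ^ 2 + b1 t ^ 2) by nra.
  apply isdC_split.
  - change (is_derive (fun s => ln (a1 s ^2 + b1 s ^ 2) / 2) t
      (fst (Cmult df (Cinv (f t))))).
    auto_derive.
    + repeat split; try (eexists; eassumption). exact Hn.
    + unfold a1, b1 in *. rewrite (is_derive_unique _ _ _ Ha1), (is_derive_unique _ _ _ Hb1). simpl. field. lra.
  - change (is_derive (fun s => atan (b1 s / a1 s)) t
      (snd (Cmult df (Cinv (f t))))).
    auto_derive.
    + repeat split; try (eexists; eassumption). lra.
    + unfold a1, b1 in *. rewrite (is_derive_unique _ _ _ Ha1), (is_derive_unique _ _ _ Hb1). simpl. field. split; lra.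
Qed.

Lemma isdC_const (c : C) t : isdC (fun _ => c) t (RtoC 0).
Proof. apply (is_derive_const (V:=CR)). Qed.

Lemma isdC_plus (f g : R -> C) t df dg : isdC f t df -> isdC g t dg ->
  isdC (fun s => Cplus (f s) (g s)) t (Cplus df dg).
Proof. intros. apply (is_derive_plus (V:=CR)); auto. Qed.

Lemma isdC_minus (f g : R -> C) t df dg : isdC f t df -> isdC g t dg ->
  isdC (fun s => Cminus (f s) (g s)) t (Cminus df dg).
Proof. intros. apply (is_derive_minus (V:=CR)); auto. Qed.

Lemma isdC_val (f : R -> C) t l l' : isdC f t l -> l = l' -> isdC f t l'.
Proof. intros; subst; auto. Qed.

Lemma cont_Cmult (f g : R -> C) t : continuous f t -> continuous g t ->
  continuous (fun s => Cmult (f s) (g s)) t.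
Proof.
  intros Hf Hg.
  pose proof (cont_fst _ _ Hf). pose proof (cont_snd _ _ Hf).
  pose proof (cont_fst _ _ Hg). pose proof (cont_snd _ _ Hg).
  apply cont_pair; simpl.
  - apply (continuous_minus (V:=R_NormedModule)); apply (continuous_mult (K:=R_AbsRing)); auto.
  - apply (continuous_plus (V:=R_NormedModule)); apply (continuous_mult (K:=R_AbsRing)); auto.
Qed.

Lemma cont_Cplus (f g : R -> C) t : continuous f t -> continuous g t ->
  continuous (fun s => Cplus (f s) (g s)) t.
Proof.
  intros Hf Hg.
  pose proof (cont_fst _ _ Hf). pose proof (cont_snd _ _ Hf).
  pose proof (cont_fst _ _ Hg). pose proof (cont_snd _ _ Hg).
  apply cont_pair; simpl; apply (continuous_plus (V:=R_NormedModule)); auto.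
Qed.

Lemma cont_const (c : C) t : continuous (fun _ : R => c) t.
Proof. apply continuous_const. Qed.

Definition dflt : (R -> C) * (R -> C) := (fun _ => RtoC 0, fun _ => RtoC 0).
Definition gi (gs : list ((R -> C) * (R -> C))) i := fst (nth i gs dflt).
Definition gi' (gs : list ((R -> C) * (R -> C))) i := snd (nth i gs dflt).

Definition SumC (F : nat -> C) k n := fold_right Cplus (RtoC 0) (map F (seq k n)).

Lemma SumC_S F k n : SumC F k (S n) = Cplus (F k) (SumC F (S k) n).
Proof. reflexivity. Qed.

Lemma SumC_ext F G k n : (forall i, (k <= i < k + n)%nat -> F i = G i) -> SumC F k n = SumC G k n.
Proof.
  revert k; induction n; intros k H. reflexivity.
  rewrite !SumC_S. rewrite H by lia. rewrite (IHn (S k)); auto. intros; apply H; lia.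
Qed.

Lemma SumC_plus F G k n : SumC (fun i => Cplus (F i) (G i)) k n = Cplus (SumC F k n) (SumC G k n).
Proof.
  revert k; induction n; intros k. simpl. unfold SumC; simpl. apply injective_projections; simpl; ring.
  rewrite !SumC_S, IHn. apply injective_projections; simpl; ring.
Qed.

Lemma SumC_scal (c : R) F k n : SumC (fun i => Cmult (RtoC c) (F i)) k n = Cmult (RtoC c) (SumC F k n).
Proof.
  revert k; induction n; intros k. unfold SumC; simpl. apply injective_projections; simpl; ring.
  rewrite !SumC_S, IHn. apply injective_projections; simpl; ring.
Qed.

Lemma SumC_tele (F : nat -> C) k n : SumC (fun i => Cminus (F (S i)) (F i)) k n = Cminus (F (k + n)%nat) (F k).
Proof.
  revert k; induction n; intros k.
  - unfold SumC; simpl. rewrite Nat.add_0_r. destruct (F k); apply injective_projections; simpl; ring.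
  - rewrite SumC_S, IHn. replace (S k + n)%nat with (k + S n)%nat by lia.
    apply injective_projections; simpl; ring.
Qed.

Lemma CI_eq ts gs f : contour_integral ts gs f =
  SumC (fun i => RInt (V:=C_R_CompleteNormedModule)
          (fun t => Cmult (f (gi gs i t)) (gi' gs i t)) (nth i ts 0) (nth (S i) ts 0)) 0 (length gs).
Proof. reflexivity. Qed.

Lemma pc_len gamma ts gs : piecewise_C1 gamma ts gs -> length ts = S (length gs).
Proof. intros [H1 [H2 _]]. lia. Qed.

Lemma pc_lt gamma ts gs i : piecewise_C1 gamma ts gs -> (i < length gs)%nat ->
  nth i ts 0 < nth (S i) ts 0.
Proof. intros H Hi. pose proof (pc_len _ _ _ H). destruct H as [_ [_ [H _]]]. apply H. lia. Qed.

Lemma pc_mono gamma ts gs i j : piecewise_C1 gamma ts gs -> (i <= j)%nat -> (j <= length gs)%nat ->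
  nth i ts 0 <= nth j ts 0.
Proof.
  intros H Hij Hj. induction Hij. lra.
  eapply Rle_trans. apply IHHij. lia. left. apply (pc_lt gamma ts gs); auto; lia.
Qed.

Lemma pc_piece gamma ts gs i : piecewise_C1 gamma ts gs -> (i < length gs)%nat ->
  (forall t, isdC (gi gs i) t (gi' gs i t)) /\ (forall t, continuous (gi' gs i) t) /\
  (forall t, nth i ts 0 <= t <= nth (S i) ts 0 -> gamma t = gi gs i t).
Proof.
  intros H Hi. destruct H as [_ [_ [_ H]]]. specialize (H i Hi). simpl in H.
  unfold gi, gi'. rewrite (nth_indep gs dflt (gamma, gamma) Hi). exact H.
Qed.

Lemma last_nth' (l : list R) d : last l d = nth (pred (length l)) l d.
Proof.
  induction l as [|a l IH]. reflexivity.
  destruct l as [|b l]. reflexivity.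
  change (last (a :: b :: l) d) with (last (b :: l) d). rewrite IH. reflexivity.
Qed.

Lemma t_end_eq gamma ts gs : piecewise_C1 gamma ts gs -> t_end ts = nth (length gs) ts 0.
Proof.
  intros H. pose proof (pc_len _ _ _ H). unfold t_end.
  rewrite last_nth', H0. reflexivity.
Qed.

Lemma piece_in gamma ts gs i t : piecewise_C1 gamma ts gs -> (i < length gs)%nat ->
  nth i ts 0 <= t <= nth (S i) ts 0 -> t_start ts <= t <= t_end ts.
Proof.
  intros H Hi Ht. rewrite (t_end_eq _ _ _ H). unfold t_start.
  pose proof (pc_mono _ _ _ 0 i H). pose proof (pc_mono _ _ _ (S i) (length gs) H). 
  split. apply Rle_trans with (nth i ts 0); [apply H0; lia|lra].
  apply Rle_trans with (nth (S i) ts 0); [lra|apply H1; lia].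
Qed.

Lemma piece_cover gamma ts gs t : piecewise_C1 gamma ts gs -> t_start ts <= t <= t_end ts ->
  exists i, (i < length gs)%nat /\ nth i ts 0 <= t <= nth (S i) ts 0.
Proof.
  intros H Ht. rewrite (t_end_eq _ _ _ H) in Ht. unfold t_start in Ht.
  assert (Hn : (0 < length gs)%nat) by (destruct H as [H1 [H2 _]]; lia).
  assert (forall n, (0 < n <= length gs)%nat -> t <= nth n ts 0 ->
            exists i, (i < n)%nat /\ nth i ts 0 <= t <= nth (S i) ts 0).
  { induction n; intros Hn' Hle. lia.
    destruct (Rle_lt_dec (nth n ts 0) t).
    - exists n; split; [lia|lra].
    - destruct n. lra. destruct (IHn ltac:(lia) ltac:(lra)) as [i [? ?]]. exists i; split; [lia|auto]. }
  apply (H0 (length gs)); [lia|lra].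
Qed.

Definition Good ts gs (f : C -> C) := forall i, (i < length gs)%nat ->
  forall t, nth i ts 0 <= t <= nth (S i) ts 0 ->
  continuous (fun s => Cmult (f (gi gs i s)) (gi' gs i s)) t.

Lemma good_exRInt gamma ts gs f i : piecewise_C1 gamma ts gs -> Good ts gs f -> (i < length gs)%nat ->
  ex_RInt (V:=C_R_CompleteNormedModule) (fun t => Cmult (f (gi gs i t)) (gi' gs i t)) (nth i ts 0) (nth (S i) ts 0).
Proof.
  intros H G Hi. apply ex_RInt_continuous. intros z Hz.
  pose proof (pc_lt _ _ _ i H Hi). rewrite Rmin_left, Rmax_right in Hz by lra.
  apply G; auto.
Qed.

Lemma CI_plus gamma ts gs f1 f2 : piecewise_C1 gamma ts gs -> Good ts gs f1 -> Good ts gs f2 ->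
  contour_integral ts gs (fun z => Cplus (f1 z) (f2 z)) =
  Cplus (contour_integral ts gs f1) (contour_integral ts gs f2).
Proof.
  intros H G1 G2. rewrite !CI_eq, <- SumC_plus. apply SumC_ext. intros i Hi.
  rewrite <- (RInt_plus (V:=C_R_CompleteNormedModule)) by (apply (good_exRInt gamma); auto; lia).
  apply (RInt_ext (V:=C_R_CompleteNormedModule)). intros x _. change (plus ?a ?b) with (Cplus a b). apply injective_projections; simpl; ring.
Qed.

Lemma scal_C (c : R) (v : C) : scal (V:=C_R_CompleteNormedModule) c v = (c * fst v, c * snd v).
Proof. reflexivity. Qed.

Lemma CI_scal gamma ts gs (c : R) f : piecewise_C1 gamma ts gs -> Good ts gs f ->
  contour_integral ts gs (fun z => Cmult (RtoC c) (f z)) =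
  Cmult (RtoC c) (contour_integral ts gs f).
Proof.
  intros H G. rewrite !CI_eq, <- SumC_scal. apply SumC_ext. intros i Hi.
  transitivity (scal (V:=C_R_CompleteNormedModule) c (RInt (V:=C_R_CompleteNormedModule) (fun t => Cmult (f (gi gs i t)) (gi' gs i t))
    (nth i ts 0) (nth (S i) ts 0))).
  - rewrite <- RInt_scal by (apply (good_exRInt gamma); auto; lia).
    apply (RInt_ext (V:=C_R_CompleteNormedModule)). intros x _. rewrite scal_C. apply injective_projections; simpl; ring.
  - rewrite scal_C. apply injective_projections; simpl; ring.
Qed.

Lemma CI_ext gamma ts gs f1 f2 : piecewise_C1 gamma ts gs ->
  (forall i, (i < length gs)%nat -> forall t, nth i ts 0 < t < nth (S i) ts 0 -> f1 (gi gs i t) = f2 (gi gs i t)) ->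
  contour_integral ts gs f1 = contour_integral ts gs f2.
Proof.
  intros H E. rewrite !CI_eq. apply SumC_ext. intros i Hi.
  pose proof (pc_lt _ _ _ i H ltac:(lia)).
  apply (RInt_ext (V:=C_R_CompleteNormedModule)). rewrite Rmin_left, Rmax_right by lra. intros x Hx. rewrite E; auto; lia.
Qed.

Lemma CI_exact gamma ts gs f (Phi : C -> C) : piecewise_C1 gamma ts gs ->
  gamma (t_start ts) = gamma (t_end ts) -> Good ts gs f ->
  (forall i, (i < length gs)%nat -> forall t, nth i ts 0 <= t <= nth (S i) ts 0 ->
     isdC (fun s => Phi (gi gs i s)) t (Cmult (f (gi gs i t)) (gi' gs i t))) ->
  contour_integral ts gs f = RtoC 0.
Proof.
  intros H Hcl G D. rewrite CI_eq.
  rewrite (SumC_ext _ (fun i => Cminus (Phi (gamma (nth (S i) ts 0))) (Phi (gamma (nth i ts 0))))).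
  - rewrite (SumC_tele (fun i => Phi (gamma (nth i ts 0)))). simpl.
    rewrite <- (t_end_eq _ _ _ H). fold (t_start ts). rewrite Hcl.
    apply injective_projections; simpl; ring.
  - intros i Hi. simpl in Hi. assert (Hi' : (i < length gs)%nat) by lia.
    pose proof (pc_lt _ _ _ i H Hi'). destruct (pc_piece _ _ _ i H Hi') as [_ [_ E]].
    rewrite (E (nth i ts 0)) by lra. rewrite (E (nth (S i) ts 0)) by lra.
    apply (is_RInt_unique (V:=C_R_CompleteNormedModule)). apply (is_RInt_derive (V:=C_R_CompleteNormedModule) (fun s => Phi (gi gs i s))).
    + rewrite Rmin_left, Rmax_right by lra. intros x Hx. apply D; auto.
    + rewrite Rmin_left, Rmax_right by lra. intros x Hx. apply G; auto.
Qed.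

Lemma CI_zero ts gs : contour_integral ts gs (fun _ => RtoC 0) = RtoC 0.
Proof.
  rewrite CI_eq. rewrite (SumC_ext _ (fun _ => RtoC 0)).
  - generalize (length gs). intros n. generalize 0%nat. induction n; intros k. reflexivity.
    rewrite SumC_S, IHn. apply injective_projections; simpl; ring.
  - intros i _. rewrite (RInt_ext (V:=C_R_CompleteNormedModule) _ (fun _ => zero)).
    + rewrite RInt_const. exact (@scal_zero_r R_Ring (CompleteNormedModule.ModuleSpace R_AbsRing C_R_CompleteNormedModule) _).
    + intros. rewrite Cmult_0_l. reflexivity.
Qed.



Lemma Cmod_le_sum (x : C) : Cmod x <= Rabs (fst x) + Rabs (snd x).
Proof.
  destruct x as [a b]. unfold Cmod. simpl.
  pose proof (Rabs_pos a); pose proof (Rabs_pos b).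
  rewrite <- (sqrt_Rsqr (Rabs a + Rabs b)) by lra.
  apply sqrt_le_1_alt. unfold Rsqr.
  assert (a * (a * 1) = Rabs a * Rabs a). { rewrite <- Rabs_mult. rewrite Rmult_1_r. rewrite Rabs_right. auto. apply Rle_ge, Rle_0_sqr. }
  assert (b * (b * 1) = Rabs b * Rabs b). { rewrite <- Rabs_mult. rewrite Rmult_1_r. rewrite Rabs_right. auto. apply Rle_ge, Rle_0_sqr. }
  nra.
Qed.

Lemma ballC (z w : C) (eps : R) : ball (M:=C_UniformSpace) z eps w -> Cmod (Cminus w z) < 2 * eps.
Proof.
  intros [H1 H2]. unfold ball in H1, H2. simpl in H1, H2. unfold AbsRing_ball, abs, minus, plus, opp in H1, H2.
  simpl in H1, H2. eapply Rle_lt_trans. apply Cmod_le_sum. simpl. lra.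
Qed.

Lemma Cmod_sub_eq (w z : C) : Cmod (Cminus w z) = sqrt ((fst w - fst z) ^ 2 + (snd w - snd z) ^ 2).
Proof. destruct w, z. reflexivity. Qed.

Lemma dist_piece (g : R -> C) (z : C) a b : a <= b -> (forall t, continuous g t) ->
  (forall t, a <= t <= b -> g t <> z) ->
  exists d, 0 < d /\ forall t, a <= t <= b -> d <= Cmod (Cminus (g t) z).
Proof.
  intros Hab Hc Hn.
  set (D := fun s => (fst (g s) - fst z) ^ 2 + (snd (g s) - snd z) ^ 2).
  assert (HD : forall c, a <= c <= b -> continuity_pt D c).
  { intros c _. apply continuity_pt_filterlim. unfold D.
    pose proof (cont_fst _ _ (Hc c)). pose proof (cont_snd _ _ (Hc c)).
    assert (continuous (fun s => fst (g s) - fst z) c).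
    { apply (continuous_minus (V:=R_NormedModule)); auto. apply continuous_const. }
    assert (continuous (fun s => snd (g s) - snd z) c).
    { apply (continuous_minus (V:=R_NormedModule)); auto. apply continuous_const. }
    set (A := fun s => fst (g s) - fst z) in *. set (B := fun s => snd (g s) - snd z) in *.
    assert (E : continuous (fun s => plus (mult (A s) (mult (A s) 1)) (mult (B s) (mult (B s) 1))) c).
    { apply (continuous_plus (V:=R_NormedModule)).
    - apply (continuous_mult (K:=R_AbsRing)); [exact H1|]. apply (continuous_mult (K:=R_AbsRing)); [exact H1|apply continuous_const].
    - apply (continuous_mult (K:=R_AbsRing)); [exact H2|]. apply (continuous_mult (K:=R_AbsRing)); [exact H2|apply continuous_const]. }
    exact E. }
  destruct (continuity_ab_min D a b Hab HD) as [m [Hm Hmab]].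
  assert (Dp : 0 < D m).
  { unfold D. specialize (Hn m Hmab). destruct (g m) as [x y], z as [x' y']. simpl.
    destruct (Req_dec x x'). destruct (Req_dec y y'). subst. exfalso; auto.
    - assert (0 < (y - y') * (y - y')). { apply Rsqr_pos_lt. lra. } pose proof (Rle_0_sqr (x - x')). unfold Rsqr in *. rewrite !Rmult_1_r. lra.
    - assert (0 < (x - x') * (x - x')). { apply Rsqr_pos_lt. lra. } pose proof (Rle_0_sqr (y - y')). unfold Rsqr in *. rewrite !Rmult_1_r. lra. }
  exists (sqrt (D m)). split. apply sqrt_lt_R0; auto.
  intros t Ht. rewrite Cmod_sub_eq. apply sqrt_le_1_alt. apply Hm. auto.
Qed.

Lemma gi_cont gamma ts gs i t : piecewise_C1 gamma ts gs -> (i < length gs)%nat -> continuous (gi gs i) t.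
Proof.
  intros H Hi. destruct (pc_piece _ _ _ i H Hi) as [D _].
  apply (ex_derive_continuous (V:=C_R_NormedModule)). eexists; apply D.
Qed.

Lemma dist_curve gamma ts gs z : piecewise_C1 gamma ts gs ->
  (forall t, t_start ts <= t <= t_end ts -> gamma t <> z) ->
  exists d, 0 < d /\ forall t, t_start ts <= t <= t_end ts -> d <= Cmod (Cminus (gamma t) z).
Proof.
  intros H Hn.
  assert (forall n, (n <= length gs)%nat -> exists d, 0 < d /\ forall i t, (i < n)%nat ->
     nth i ts 0 <= t <= nth (S i) ts 0 -> d <= Cmod (Cminus (gamma t) z)).
  { induction n; intros Hn'.
    - exists 1. split. lra. intros; lia.
    - destruct (IHn ltac:(lia)) as [d1 [Hd1 P1]].
      assert (Hlt := pc_lt _ _ _ n H ltac:(lia)).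
      destruct (pc_piece _ _ _ n H ltac:(lia)) as [_ [_ E]].
      destruct (dist_piece (gi gs n) z (nth n ts 0) (nth (S n) ts 0)) as [d2 [Hd2 P2]].
      + lra.
      + intros t. apply (gi_cont gamma ts gs); auto; lia.
      + intros t Ht. rewrite <- E by auto. apply Hn. apply (piece_in gamma ts gs n); auto; lia.
      + exists (Rmin d1 d2). split. apply Rmin_pos; auto.
        intros i t Hi Ht. destruct (Nat.eq_dec i n).
        * subst. rewrite E by auto. eapply Rle_trans. apply Rmin_r. apply P2; auto.
        * eapply Rle_trans. apply Rmin_l. apply P1 with i; auto; lia. }
  destruct (H0 (length gs) ltac:(lia)) as [d [Hd P]]. exists d. split; auto.
  intros t Ht. destruct (piece_cover _ _ _ t H Ht) as [i [Hi Hit]]. apply P with i; auto.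
Qed.

Definition OffC gamma ts (z : C) := forall t, t_start ts <= t <= t_end ts -> gamma t <> z.

Lemma Cminus_eq0 (a b : C) : Cminus a b = RtoC 0 -> a = b.
Proof.
  destruct a as [x y], b as [x' y']. intros E. injection E. intros. 
  apply injective_projections; simpl; lra.
Qed.

Lemma good_of_deriv gamma ts gs f : piecewise_C1 gamma ts gs ->
  (forall i, (i < length gs)%nat -> forall t, nth i ts 0 <= t <= nth (S i) ts 0 ->
     exists l, isdC (fun s => f (gi gs i s)) t l) -> Good ts gs f.
Proof.
  intros H D i Hi t Ht. destruct (pc_piece _ _ _ i H Hi) as [_ [C _]].
  apply cont_Cmult. 2: apply C.
  destruct (D i Hi t Ht) as [l Hl].
  apply (ex_derive_continuous (V:=C_R_NormedModule)). eexists; apply Hl.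
Qed.

Lemma isd_inv_sub gamma ts gs i z t : piecewise_C1 gamma ts gs -> (i < length gs)%nat ->
  gi gs i t <> z ->
  isdC (fun s => Cinv (Cminus (gi gs i s) z)) t
    (Copp (Cmult (Cminus (gi' gs i t) (RtoC 0)) (Cmult (Cinv (Cminus (gi gs i t) z)) (Cinv (Cminus (gi gs i t) z))))).
Proof.
  intros H Hi Hz. destruct (pc_piece _ _ _ i H Hi) as [D _].
  apply isdC_inv. apply isdC_minus. apply D. apply isdC_const.
  intros E. apply Hz. apply Cminus_eq0. auto.
Qed.

Lemma good_inv gamma ts gs z : piecewise_C1 gamma ts gs -> OffC gamma ts z ->
  Good ts gs (fun w => Cinv (Cminus w z)).
Proof.
  intros H Hz. apply (good_of_deriv gamma); auto. intros i Hi t Ht.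
  eexists. apply (isd_inv_sub gamma ts); auto.
  destruct (pc_piece _ _ _ i H Hi) as [_ [_ E]]. rewrite <- E by auto.
  apply Hz. apply (piece_in gamma ts gs i); auto.
Qed.

Definition W ts gs (z : C) := contour_integral ts gs (fun w => Cinv (Cminus w z)).

Lemma re_pos (u : C) : Cmod u < 1 -> 0 < fst (Cminus (RtoC 1) u).
Proof.
  intros Hu. pose proof (re_le_Cmod u). unfold Re in H. simpl.
  pose proof (Rle_abs (fst u)). lra.
Qed.


Lemma Cneq0 (a b : C) : a <> b -> Cminus a b <> RtoC 0.
Proof. intros H E. apply H, Cminus_eq0, E. Qed.

Lemma good_scal ts gs (c : R) f : Good ts gs f -> Good ts gs (fun w => Cmult (RtoC c) (f w)).
Proof.
  intros G i Hi t Ht.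
  apply (continuous_ext (fun s => Cmult (RtoC c) (Cmult (f (gi gs i s)) (gi' gs i s)))).
  - intros s. apply Cmult_assoc.
  - apply cont_Cmult. apply cont_const. apply (G i Hi t Ht).
Qed.

Lemma good_plus ts gs f1 f2 : Good ts gs f1 -> Good ts gs f2 -> Good ts gs (fun w => Cplus (f1 w) (f2 w)).
Proof.
  intros G1 G2 i Hi t Ht.
  apply (continuous_ext (fun s => Cplus (Cmult (f1 (gi gs i s)) (gi' gs i s)) (Cmult (f2 (gi gs i s)) (gi' gs i s)))).
  - intros s. symmetry. apply Cmult_plus_distr_r.
  - apply cont_Cplus. apply (G1 i Hi t Ht). apply (G2 i Hi t Ht).
Qed.

Lemma W_local gamma ts gs z z' : piecewise_C1 gamma ts gs ->
  gamma (t_start ts) = gamma (t_end ts) -> OffC gamma ts z ->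
  (forall t, t_start ts <= t <= t_end ts -> Cmod (Cminus z' z) < Cmod (Cminus (gamma t) z)) ->
  W ts gs z' = W ts gs z.
Proof.
  intros H Hcl Hz Hd.
  assert (Hz' : OffC gamma ts z').
  { intros t Ht E. specialize (Hd t Ht). rewrite E in Hd. lra. }
  set (f := fun w => Cplus (Cinv (Cminus w z')) (Cmult (RtoC (-1)) (Cinv (Cminus w z)))).
  assert (G1 := good_inv _ _ _ _ H Hz). assert (G2 := good_inv _ _ _ _ H Hz').
  assert (G1' := good_scal ts gs (-1) _ G1).
  assert (E1 : contour_integral ts gs f = Cplus (W ts gs z') (Cmult (RtoC (-1)) (W ts gs z))).
  { unfold f, W. rewrite (CI_plus gamma); auto. rewrite (CI_scal gamma); auto. }
  assert (E2 : contour_integral ts gs f = RtoC 0).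
  { apply (CI_exact gamma ts gs f (fun w => LogC (Cmult (Cminus w z') (Cinv (Cminus w z))))); auto.
    - apply good_plus; auto.
    - intros i Hi t Ht.
      destruct (pc_piece _ _ _ i H Hi) as [D [_ Eg]].
      assert (Ht' := piece_in _ _ _ _ _ H Hi Ht).
      assert (n1 : gi gs i t <> z) by (rewrite <- Eg by auto; apply Hz; auto).
      assert (n2 : gi gs i t <> z') by (rewrite <- Eg by auto; apply Hz'; auto).
      assert (n1' := Cneq0 _ _ n1). assert (n2' := Cneq0 _ _ n2).
      assert (Hh := isdC_mult (fun s => Cminus (gi gs i s) z') (fun s => Cinv (Cminus (gi gs i s) z)) t _ _
         (isdC_minus _ _ t _ _ (D t) (isdC_const z' t)) (isd_inv_sub gamma ts gs i z t H Hi n1)).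
      eapply isdC_val. apply (isdC_log _ t _ Hh).
      + replace (Cmult (Cminus (gi gs i t) z') (Cinv (Cminus (gi gs i t) z)))
          with (Cminus (RtoC 1) (Cmult (Cminus z' z) (Cinv (Cminus (gi gs i t) z)))) by (field; auto).
        apply re_pos. rewrite Cmod_mult, Cmod_inv by auto.
        specialize (Hd t Ht'). rewrite Eg in Hd by auto.
        assert (0 < Cmod (Cminus (gi gs i t) z)) by (apply Cmod_gt_0; auto).
        apply (Rmult_lt_reg_r (Cmod (Cminus (gi gs i t) z))); auto.
        rewrite Rmult_assoc, Rinv_l by lra. lra.
      + unfold f. match goal with |- ?a = ?b => change (@eq C a b) end. field. split; auto. }
  rewrite E1 in E2. destruct (W ts gs z') as [a b], (W ts gs z) as [c d].
  injection E2; intros; apply injective_projections; simpl in *; lra.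
Qed.

Lemma fst_pos_nz (u : C) : 0 < fst u -> u <> RtoC 0.
Proof. intros H E. rewrite E in H. simpl in H. lra. Qed.

Lemma W_far gamma ts gs z : piecewise_C1 gamma ts gs ->
  gamma (t_start ts) = gamma (t_end ts) ->
  (forall t, t_start ts <= t <= t_end ts -> Cmod (gamma t) < Cmod z) ->
  W ts gs z = RtoC 0.
Proof.
  intros H Hcl Hd.
  assert (Hz : OffC gamma ts z).
  { intros t Ht E. specialize (Hd t Ht). rewrite E in Hd. lra. }
  assert (z0 : z <> RtoC 0).
  { intros E. assert (t_start ts <= t_start ts <= t_end ts).
    { rewrite (t_end_eq _ _ _ H). unfold t_start. split. lra. apply (pc_mono _ _ _ 0 _ H); lia. }
    specialize (Hd _ H0). rewrite E, Cmod_0 in Hd. pose proof (Cmod_ge_0 (gamma (t_start ts))). lra. }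
  apply (CI_exact gamma ts gs _ (fun w => LogC (Cminus (RtoC 1) (Cmult w (Cinv z))))); auto.
  - apply (good_inv gamma); auto.
  - intros i Hi t Ht.
    destruct (pc_piece _ _ _ i H Hi) as [D [_ Eg]].
    assert (Ht' := piece_in _ _ _ _ _ H Hi Ht).
    assert (n1 : gi gs i t <> z) by (rewrite <- Eg by auto; apply Hz; auto).
    assert (n1' := Cneq0 _ _ n1).
    assert (Hh := isdC_minus (fun _ => RtoC 1) (fun s => Cmult (gi gs i s) (Cinv z)) t _ _
         (isdC_const (RtoC 1) t) (isdC_mult _ _ t _ _ (D t) (isdC_const (Cinv z) t))).
    assert (Hp : 0 < fst (Cminus (RtoC 1) (Cmult (gi gs i t) (Cinv z)))).
    { apply re_pos. rewrite Cmod_mult, Cmod_inv by auto.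
      specialize (Hd t Ht'). rewrite Eg in Hd by auto.
      assert (0 < Cmod z) by (apply Cmod_gt_0; auto).
      apply (Rmult_lt_reg_r (Cmod z)); auto.
      rewrite Rmult_assoc, Rinv_l by lra. lra. }
    eapply isdC_val. apply (isdC_log _ t _ Hh); auto.
    match goal with |- ?a = ?b => change (@eq C a b) end.
    assert (hz := fst_pos_nz _ Hp).
    field. split; [auto|split; [auto|]]. apply Cneq0. auto.
Qed.

Definition clamp (u : R) := Rmax 0 (Rmin 1 u).

Lemma clamp_in u : 0 <= clamp u <= 1.
Proof. unfold clamp, Rmax, Rmin. repeat destruct Rle_dec; lra. Qed.

Lemma clamp_id u : 0 <= u <= 1 -> clamp u = u.
Proof. intros. unfold clamp, Rmax, Rmin. repeat destruct Rle_dec; lra. Qed.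

Lemma clamp_lip u v : Rabs (clamp v - clamp u) <= Rabs (v - u).
Proof.
  pose proof (Rle_abs (v - u)). pose proof (Rle_abs (-(v - u))). rewrite Rabs_Ropp in H0.
  apply Rabs_le. unfold clamp, Rmax, Rmin. repeat destruct Rle_dec; lra.
Qed.

Lemma W_ext gamma ts gs y : piecewise_C1 gamma ts gs ->
  gamma (t_start ts) = gamma (t_end ts) -> in_exterior gamma ts y -> W ts gs y = RtoC 0.
Proof.
  intros H Hcl [_ [p [Pc [P0 [Poff Pfar]]]]].
  set (q := fun u => p (clamp u)).
  assert (Qoff : forall u, OffC gamma ts (q u)).
  { intros u t Ht E. apply (Poff (clamp u) (clamp_in u)). exists t. split; auto. }
  assert (Loc : forall u, exists eta, 0 < eta /\ forall v, Rabs (v - u) < eta -> W ts gs (q v) = W ts gs (q u)).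
  { intros u. destruct (dist_curve gamma ts gs (q u) H (Qoff u)) as [d [Hd Pd]].
    assert (Hc := Pc (clamp u) (clamp_in u)).
    unfold continuous in Hc. rewrite filterlim_locally in Hc.
    destruct (Hc (mkposreal (d/2) ltac:(lra))) as [del Hdel].
    exists del. split. apply cond_pos. intros v Hv.
    apply (W_local gamma); auto. intros t Ht.
    eapply Rlt_le_trans. 2: apply (Pd t Ht).
    assert (B : ball (M:=C_UniformSpace) (p (clamp u)) (d/2) (p (clamp v))).
    { apply Hdel. unfold ball; simpl. unfold AbsRing_ball, abs, minus, plus, opp; simpl.
      eapply Rle_lt_trans. apply clamp_lip. exact Hv. }
    apply ballC in B. unfold q. lra. }
  set (psi := fun u => if Ceq_dec (W ts gs (q u)) (W ts gs (q 0)) then 0 else 1).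
  assert (Cps : forall u, continuity_pt psi u).
  { intros u eps Heps. destruct (Loc u) as [eta [He Pe]]. exists eta. split; auto.
    intros v [_ Hv]. simpl in Hv. unfold R_dist in Hv. simpl. unfold R_dist.
    unfold psi. rewrite (Pe v Hv). rewrite Rminus_diag, Rabs_R0. auto. }
  assert (Eq : W ts gs (q 1) = W ts gs (q 0)).
  { destruct (Ceq_dec (W ts gs (q 1)) (W ts gs (q 0))) as [e|ne]; auto. exfalso.
    destruct (IVT (fun u => psi u - /2) 0 1) as [x [_ Hx]].
    - intros x. apply continuity_pt_minus. apply Cps. apply continuity_pt_const. intros a b; auto.
    - lra.
    - unfold psi. destruct Ceq_dec as [_|n]. lra. exfalso; auto.
    - unfold psi. destruct Ceq_dec as [e|_]. contradiction. lra.
    - unfold psi in Hx. destruct Ceq_dec; lra. }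
  unfold q in Eq. rewrite !clamp_id in Eq by lra. rewrite <- P0, <- Eq.
  apply (W_far gamma); auto.
Qed.

Definition twoPIi := Cmult (RtoC (2 * PI)) Ci.

Definition NN gamma ts gs (f : C -> C) := piecewise_C1 gamma ts gs -> Good ts gs f /\
  exists r, 0 <= r /\ contour_integral ts gs f = Cmult (RtoC r) twoPIi.

Lemma NN_ext gamma ts gs f g : (forall z, f z = g z) -> NN gamma ts gs f -> NN gamma ts gs g.
Proof. intros E. replace g with f; auto. apply functional_extensionality; auto. Qed.

Lemma NN_zero gamma ts gs : NN gamma ts gs (fun _ => RtoC 0).
Proof.
  intros H. split.
  - apply (good_of_deriv gamma); auto. intros. eexists. apply isdC_const.
  - exists 0. split. lra. rewrite CI_zero. apply injective_projections; simpl; ring.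
Qed.

Lemma NN_plus gamma ts gs f1 f2 : NN gamma ts gs f1 -> NN gamma ts gs f2 ->
  NN gamma ts gs (fun z => Cplus (f1 z) (f2 z)).
Proof.
  intros N1 N2 H. destruct (N1 H) as [G1 [r1 [h1 e1]]]. destruct (N2 H) as [G2 [r2 [h2 e2]]].
  split. apply good_plus; auto.
  exists (r1 + r2). split. lra. rewrite (CI_plus gamma); auto. rewrite e1, e2.
  apply injective_projections; simpl; ring.
Qed.

Lemma NN_scal gamma ts gs c f : 0 <= c -> NN gamma ts gs f ->
  NN gamma ts gs (fun z => Cmult (RtoC c) (f z)).
Proof.
  intros hc N1 H. destruct (N1 H) as [G1 [r1 [h1 e1]]].
  split. apply good_scal; auto.
  exists (c * r1). split. apply Rmult_le_pos; auto. rewrite (CI_scal gamma); auto. rewrite e1.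
  apply injective_projections; simpl; ring.
Qed.

Definition pairf (p q : R) (z : C) := Cmult (Cinv (Cminus (RtoC p) z)) (Cinv (Cminus (RtoC q) z)).

Lemma isd_inv_rsub gamma ts gs i (x : R) t : piecewise_C1 gamma ts gs -> (i < length gs)%nat ->
  gi gs i t <> RtoC x ->
  isdC (fun s => Cinv (Cminus (RtoC x) (gi gs i s))) t
    (Copp (Cmult (Cminus (RtoC 0) (gi' gs i t)) (Cmult (Cinv (Cminus (RtoC x) (gi gs i t))) (Cinv (Cminus (RtoC x) (gi gs i t)))))).
Proof.
  intros H Hi Hz. destruct (pc_piece _ _ _ i H Hi) as [D _].
  apply isdC_inv. apply isdC_minus. apply isdC_const. apply D.
  apply Cneq0. auto.
Qed.

Lemma pair_NN gamma ts gs (p q : R) : piecewise_C1 gamma ts gs ->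
  gamma (t_start ts) = gamma (t_end ts) ->
  OffC gamma ts (RtoC p) -> OffC gamma ts (RtoC q) ->
  (in_exterior gamma ts (RtoC p) -> W ts gs (RtoC p) = RtoC 0) ->
  (~ in_exterior gamma ts (RtoC p) -> W ts gs (RtoC p) = Cmult (RtoC (-2 * PI)) Ci) ->
  (in_exterior gamma ts (RtoC q) -> W ts gs (RtoC q) = RtoC 0) ->
  (~ in_exterior gamma ts (RtoC q) -> W ts gs (RtoC q) = Cmult (RtoC (-2 * PI)) Ci) ->
  (~ in_exterior gamma ts (RtoC p) -> in_exterior gamma ts (RtoC q) -> p < q) ->
  (~ in_exterior gamma ts (RtoC q) -> in_exterior gamma ts (RtoC p) -> q < p) ->
  NN gamma ts gs (pairf p q).
Proof.
  intros H Hcl Op Oq Wp1 Wp2 Wq1 Wq2 O1 O2 _.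
  assert (Npq : forall i, (i < length gs)%nat -> forall t, nth i ts 0 <= t <= nth (S i) ts 0 ->
            gi gs i t <> RtoC p /\ gi gs i t <> RtoC q).
  { intros i Hi t Ht. destruct (pc_piece _ _ _ i H Hi) as [_ [_ Eg]].
    assert (Ht' := piece_in _ _ _ _ _ H Hi Ht). rewrite <- Eg by auto. split; [apply Op|apply Oq]; auto. }
  assert (G : Good ts gs (pairf p q)).
  { apply (good_of_deriv gamma); auto. intros i Hi t Ht. destruct (Npq i Hi t Ht).
    eexists. apply isdC_mult; apply (isd_inv_rsub gamma ts); auto. }
  split; auto.
  destruct (Req_dec p q) as [e|ne].
  - subst q. exists 0. split. lra.
    rewrite (CI_exact gamma ts gs _ (fun w => Cinv (Cminus (RtoC p) w))); auto.
    + apply injective_projections; simpl; ring.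
    + intros i Hi t Ht. destruct (Npq i Hi t Ht) as [n1 _].
      eapply isdC_val. apply (isd_inv_rsub gamma ts); auto.
      unfold pairf. match goal with |- ?a = ?b => change (@eq C a b) end.
      assert (n1' := Cneq0 _ _ (not_eq_sym n1)).
      field. auto.
  - set (f := fun w => Cmult (RtoC (/ (q - p))) (Cplus (Cinv (Cminus w (RtoC q))) (Cmult (RtoC (-1)) (Cinv (Cminus w (RtoC p)))))).
    assert (E : contour_integral ts gs (pairf p q) = contour_integral ts gs f).
    { apply (CI_ext gamma); auto. intros i Hi t Ht. destruct (Npq i Hi t ltac:(lra)) as [n1 n2].
      unfold pairf, f.
      assert (n1' := Cneq0 _ _ (not_eq_sym n1)). assert (n2' := Cneq0 _ _ (not_eq_sym n2)).
      assert (n1'' := Cneq0 _ _ n1). assert (n2'' := Cneq0 _ _ n2).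
      assert (qp : RtoC (q - p) <> RtoC 0). { intros h. injection h. lra. }
      rewrite RtoC_inv by lra. rewrite RtoC_minus in *.
      field. repeat split; auto. }
    assert (Gp := good_inv _ _ _ _ H Op). assert (Gq := good_inv _ _ _ _ H Oq).
    rewrite E. unfold f. rewrite (CI_scal gamma); auto.
    2: { apply good_plus; auto. apply good_scal; auto. }
    rewrite (CI_plus gamma); auto. 2: apply good_scal; auto.
    rewrite (CI_scal gamma); auto. fold (W ts gs (RtoC q)). fold (W ts gs (RtoC p)).
    destruct (Classical_Prop.classic (in_exterior gamma ts (RtoC p))) as [Ep|Ip];
    destruct (Classical_Prop.classic (in_exterior gamma ts (RtoC q))) as [Eq|Iq].
    + exists 0. split. lra. rewrite Wp1, Wq1 by auto. unfold twoPIi. apply injective_projections; simpl; ring.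
    + exists (/ (p - q)). specialize (O2 Iq Ep). split. left. apply Rinv_0_lt_compat. lra.
      rewrite Wp1, Wq2 by auto. unfold twoPIi. apply injective_projections; simpl; field; lra.
    + exists (/ (q - p)). specialize (O1 Ip Eq). split. left. apply Rinv_0_lt_compat. lra.
      rewrite Wp2, Wq1 by auto. unfold twoPIi. apply injective_projections; simpl; field; lra.
    + exists 0. split. lra. rewrite Wp2, Wq2 by auto. unfold twoPIi. apply injective_projections; simpl; ring.
Qed.

Lemma inner_NN gamma ts gs (p : R) lQ :
  (forall B q, In (B, q) lQ -> 0 <= B) ->
  (forall B q, In (B, q) lQ -> 0 < B -> NN gamma ts gs (pairf p q)) ->
  NN gamma ts gs (fun z => Cmult (Cinv (Cminus (RtoC p) z)) (ratH lQ z)).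
Proof.
  induction lQ as [|[B q] l IH]; intros Hn Hp.
  - eapply NN_ext. 2: apply NN_zero. intros z. simpl. rewrite Cmult_0_r. reflexivity.
  - assert (IH' : NN gamma ts gs (fun z => Cmult (Cinv (Cminus (RtoC p) z)) (ratH l z))).
    { apply IH; intros; [eapply Hn|eapply Hp]; simpl; eauto. }
    assert (hB : 0 <= B) by (eapply Hn; left; eauto).
    destruct (Rle_lt_or_eq_dec _ _ hB) as [pos|zer].
    + eapply NN_ext. 2: apply (NN_plus _ _ _ _ _ IH' (NN_scal _ _ _ B _ hB (Hp B q (or_introl eq_refl) pos))).
      intros z. simpl. unfold pairf. match goal with |- ?a = ?b => change (@eq C a b) end. ring.
    + subst B. eapply NN_ext. 2: apply IH'. intros z. simpl.
      match goal with |- ?a = ?b => change (@eq C a b) end. ring.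
Qed.

Lemma outer_NN gamma ts gs lP lQ :
  (forall A p, In (A, p) lP -> 0 <= A) ->
  (forall A p, In (A, p) lP -> 0 < A -> NN gamma ts gs (fun z => Cmult (Cinv (Cminus (RtoC p) z)) (ratH lQ z))) ->
  NN gamma ts gs (fun z => Cmult (ratH lP z) (ratH lQ z)).
Proof.
  induction lP as [|[A p] l IH]; intros Hn Hp.
  - eapply NN_ext. 2: apply NN_zero. intros z. simpl. rewrite Cmult_0_l. reflexivity.
  - assert (IH' : NN gamma ts gs (fun z => Cmult (ratH l z) (ratH lQ z))).
    { apply IH; intros; [eapply Hn|eapply Hp]; simpl; eauto. }
    assert (hA : 0 <= A) by (eapply Hn; left; eauto).
    destruct (Rle_lt_or_eq_dec _ _ hA) as [pos|zer].
    + eapply NN_ext. 2: apply (NN_plus _ _ _ _ _ IH' (NN_scal _ _ _ A _ hA (Hp A p (or_introl eq_refl) pos))).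
      intros z. simpl. match goal with |- ?a = ?b => change (@eq C a b) end. ring.
    + subst A. eapply NN_ext. 2: apply IH'. intros z. simpl.
      match goal with |- ?a = ?b => change (@eq C a b) end. ring.
Qed.

Theorem lemma2p1 (lP lQ : list (R * R)) (gamma : R -> C) (ts : list R)
    (gs : list ((R -> C) * (R -> C))) :
  nonneg_coeffs lP -> nonneg_coeffs lQ ->
  piecewise_C1 gamma ts gs -> jordan_closed gamma ts -> clockwise gamma ts gs ->
  (forall x, (is_pole lP x \/ is_pole lQ x) -> ~ on_curve gamma ts (RtoC x)) ->
  (forall x y, (is_pole lP x \/ is_pole lQ x) -> (is_pole lP y \/ is_pole lQ y) ->
     in_interior gamma ts (RtoC x) -> in_exterior gamma ts (RtoC y) -> (x < y)%R) ->
  let w := Cdiv (contour_integral ts gs (fun z => Cmult (ratH lP z) (ratH lQ z)))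
                (Cmult (RtoC (2 * PI)) Ci) in
  Im w = 0%R /\ (0 <= Re w)%R.
Proof.
  intros HP HQ H [Hcl _] Hcw Hoff Hord w.
  assert (Off : forall x, (is_pole lP x \/ is_pole lQ x) -> OffC gamma ts (RtoC x)).
  { intros x hx t Ht E. apply (Hoff x hx). exists t. auto. }
  assert (W1 : forall x, (is_pole lP x \/ is_pole lQ x) -> in_exterior gamma ts (RtoC x) -> W ts gs (RtoC x) = RtoC 0).
  { intros x hx he. apply (W_ext gamma); auto. }
  assert (W2 : forall x, (is_pole lP x \/ is_pole lQ x) -> ~ in_exterior gamma ts (RtoC x) ->
     W ts gs (RtoC x) = Cmult (RtoC (-2 * PI)) Ci).
  { intros x hx he. apply Hcw. split; auto. }
  assert (N : NN gamma ts gs (fun z => Cmult (ratH lP z) (ratH lQ z))).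
  { apply outer_NN. exact HP. intros A p hin hA.
    assert (pp : is_pole lP p \/ is_pole lQ p) by (left; exists A; auto).
    apply inner_NN. exact HQ. intros B q hinq hB.
    assert (qq : is_pole lP q \/ is_pole lQ q) by (right; exists B; auto).
    apply (pair_NN gamma); auto.
    - intros a b. apply (Hord p q); auto. split; auto.
    - intros a b. apply (Hord q p); auto. split; auto. }
  destruct (N H) as [_ [r [hr e]]].
  assert (E : w = RtoC r).
  { unfold w. rewrite e. unfold twoPIi.
    assert (k : Cmult (RtoC (2 * PI)) Ci <> RtoC 0).
    { intros h. injection h. intros. pose proof PI_RGT_0. simpl in *. lra. }
    field. split. apply Ci_nz. pose proof PI_RGT_0. intros h. injection h. lra. }
  rewrite E. simpl. split; auto.
Qed.
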